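(* For all integers $n\ge1$ and $i\ge1$, $[a_n,e_i^{-1}]\in\mathcal A$, and $$[a_n,e_i^{-1}]\equiv a_{n+i}(\bar n)\pmod{t^{n+i+1}},$$ where $\bar n\in\{0,1\}$ with $\bar n\equiv n\pmod 2$; that is, $[a_n,e_i^{-1}]=(g,t)$ with $g\equiv 1+\bar n\,t^{n+i}\pmod{t^{n+i+1}}$.
   Context: Work in the Riordan group $\mathcal R(\mathbb F_2)$ of pairs $(g,f)$ of formal power series over $\mathbb F_2$ with $g=1+\cdots$, $f=t+\cdots$, with product $(g_1,f_1)(g_2,f_2)=(g_1\cdot(g_2\circ f_1),\,f_2\circ f_1)$. $\mathcal A=\{(g,t)\}$ is the Appell subgroup. For $k\ge1$, $a_k(\beta)=(1+\beta t^k,t)$ for $\beta\in\mathbb F_2$, $a_k=a_k(1)$, and $e_i=(1,t+t^{i+1})$. The commutator is $[x,y]=x^{-1}y^{-1}xy$. *)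

(* Defs.v *)
From mathcomp Require Import all_boot all_algebra.
From Stdlib Require Import ClassicalEpsilon.

Set Implicit Arguments.
Unset Strict Implicit.
Unset Printing Implicit Defensive.
Import GRing.Theory.
Local Open Scope ring_scope.

Definition F2 : Type := 'F_2.

(* formal power series: n |-> coefficient of t^n *)
Definition fps := nat -> F2.

Definition ps_one : fps := fun n => if n == 0%N then 1 else 0.
Definition ps_monom (k : nat) (c : F2) : fps := fun n => if n == k then c else 0.
Definition ps_t : fps := ps_monom 1 1.
Definition ps_add (f g : fps) : fps := fun n => f n + g n.
Definition ps_mul (f g : fps) : fps :=
  fun n => \sum_(k < n.+1) f k * g (n - k)%N.
Definition ps_pow (f : fps) (k : nat) : fps := iter k (ps_mul f) ps_one.
(* composition g o f, meaningful when f has zero constant term *)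
Definition ps_comp (g f : fps) : fps :=
  fun n => \sum_(k < n.+1) g k * ps_pow f k n.

Definition riordan := (fps * fps)%type.
Definition is_riordan (x : riordan) : Prop :=
  x.1 0%N = 1 /\ x.2 0%N = 0 /\ x.2 1%N = 1.

Definition rmul (x y : riordan) : riordan :=
  (ps_mul x.1 (ps_comp y.1 x.2), ps_comp y.2 x.2).
Definition rone : riordan := (ps_one, ps_t).

Definition rinv (x : riordan) : riordan :=
  epsilon (inhabits rone)
    (fun y => is_riordan y /\ rmul x y = rone /\ rmul y x = rone).

Definition rcomm (x y : riordan) : riordan :=
  rmul (rmul (rmul (rinv x) (rinv y)) x) y.

Definition in_appell (x : riordan) : Prop := is_riordan x /\ x.2 = ps_t.

Definition a_ (k : nat) (beta : F2) : riordan := (ps_add ps_one (ps_monom k beta), ps_t).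
Definition e_ (i : nat) : riordan := (ps_one, ps_add ps_t (ps_monom i.+1 1)).

(* Main.v *)
Require Import Defs.
From mathcomp Require Import all_boot all_algebra zify.
From mathcomp Require Import ring.
From Stdlib Require Import ClassicalEpsilon FunctionalExtensionality.
Unset Printing Implicit Defensive.
Import GRing.Theory.
Local Open Scope ring_scope.

Definition tr (N : nat) (f : fps) : {poly F2} := \poly_(j < N) f j.
Definition eqN (N : nat) (p q : {poly F2}) := forall m, (m < N)%N -> p`_m = q`_m.

Lemma coef_tr N f m : (m < N)%N -> (tr N f)`_m = f m.
Proof. by move=> h; rewrite /tr coef_poly h. Qed.

Lemma tr0 N f : f 0%N = 0 -> (tr N f)`_0 = 0.
Proof. by move=> h; rewrite /tr coef_poly; case: ifP. Qed.

Lemma eqN_refl N p : eqN N p p. Proof. by []. Qed.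
Lemma eqN_sym N p q : eqN N p q -> eqN N q p.
Proof. by move=> h m hm; rewrite h. Qed.
Lemma eqN_trans N p q r : eqN N p q -> eqN N q r -> eqN N p r.
Proof. by move=> h1 h2 m hm; rewrite h1 // h2. Qed.
Lemma eqN_le N M p q : (N <= M)%N -> eqN M p q -> eqN N p q.
Proof. by move=> hNM h m hm; apply: h; apply: leq_trans hNM. Qed.

Lemma eqN_add N p p' q q' : eqN N p p' -> eqN N q q' -> eqN N (p + q) (p' + q').
Proof. by move=> h1 h2 m hm; rewrite !coefD h1 // h2. Qed.

Lemma eqN_scale N c p p' : eqN N p p' -> eqN N (c *: p) (c *: p').
Proof. by move=> h1 m hm; rewrite !coefZ h1. Qed.

Lemma eqN_mul N p p' q q' : eqN N p p' -> eqN N q q' -> eqN N (p * q) (p' * q').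
Proof.
move=> h1 h2 m hm; rewrite !coefM; apply: eq_bigr => j _.
have hj : (j < N)%N by apply: leq_ltn_trans hm; rewrite -ltnS.
rewrite h1 // h2 //; apply: leq_ltn_trans hm; exact: leq_subr.
Qed.

Lemma eqN_exp N p q k : eqN N p q -> eqN N (p ^+ k) (q ^+ k).
Proof.
move=> h; elim: k => [|k IH]; first by rewrite !expr0.
by rewrite !exprS; apply: eqN_mul.
Qed.

Lemma expr_low (p : {poly F2}) k m : p`_0 = 0 -> (m < k)%N -> (p ^+ k)`_m = 0.
Proof.
move=> p0; elim: k m => [//|k IH] m hm.
rewrite exprS coefM big_ord_recl p0 mul0r add0r big1 // => j _.
rewrite IH ?mulr0 //=.
have := ltn_ord j; rewrite /bump /=; lia.
Qed.

Lemma eqN_comp N p p' q q' : eqN N p p' -> eqN N q q' -> q`_0 = 0 ->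
  eqN N (p \Po q) (p' \Po q').
Proof.
move=> h1 h2 q0.
have step1 : eqN N (p \Po q) (p' \Po q).
  move=> m hm; apply/eqP; rewrite -subr_eq0 -coefB -comp_polyB coef_comp_poly.
  apply/eqP; apply: big1 => j _; rewrite coefB.
  case: (ltnP j N) => hj; first by rewrite h1 // subrr mul0r.
  by rewrite expr_low ?mulr0 //; apply: leq_trans hj.
apply: eqN_trans step1 _ => m hm; rewrite !coef_comp_poly; apply: eq_bigr => j _.
by rewrite (eqN_exp _ _ _ j h2).
Qed.

Lemma eqN_ext f g : (forall N, eqN N (tr N f) (tr N g)) -> f = g.
Proof.
move=> h; apply: functional_extensionality => m.
by have := h m.+1 m (ltnSn m); rewrite !coef_tr.
Qed.
Arguments eqN_refl {N p}.
Arguments eqN_sym {N p q}.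
Arguments eqN_trans {N p q r}.
Arguments eqN_add {N p p' q q'}.
Arguments eqN_mul {N p p' q q'}.
Arguments eqN_scale {N} c {p p'}.
Arguments eqN_exp {N p q} k.
Arguments eqN_comp {N p p' q q'}.

Lemma T_mul N f g : eqN N (tr N (ps_mul f g)) (tr N f * tr N g).
Proof.
move=> m hm; rewrite coef_tr // coefM; apply: eq_bigr => j _.
rewrite !coef_tr //; have := ltn_ord j; lia.
Qed.

Lemma T_pow N f k : eqN N (tr N (ps_pow f k)) (tr N f ^+ k).
Proof.
elim: k => [|k IH] m hm.
  by rewrite coef_tr // expr0 coef1 /ps_pow /= /ps_one; case: (m == 0%N).
rewrite exprS -(eqN_mul (@eqN_refl N (tr N f)) IH _ hm).
by rewrite -T_mul.
Qed.

Lemma T_comp N g f : f 0%N = 0 -> eqN N (tr N (ps_comp g f)) (tr N g \Po tr N f).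
Proof.
move=> f0 m hm; rewrite coef_tr // /tr [X in X \Po _]poly_def (big_morph (fun p => p \Po _) (fun p r => comp_polyD p r _) (comp_poly0 _)) coef_sum /=.
rewrite -(subnKC hm) big_split_ord /= [X in _ = _ + X]big1 ?addr0.
  apply: eq_bigr => j _; rewrite comp_polyZ coefZ.
  have -> : 'X^j \Po \poly_(j0 < m.+1 + (N - m.+1)) f j0 = (tr N f) ^+ j.
    by rewrite (subnKC hm) /tr; elim: (nat_of_ord j) => [|k IH];
      rewrite ?expr0 ?comp_polyC // exprS comp_polyM comp_polyX IH -exprS.
  by rewrite -(T_pow _ _ _ _ hm) coef_tr.
move=> j _; rewrite comp_polyZ coefZ.
have -> : 'X^(m.+1 + j) \Po \poly_(j0 < m.+1 + (N - m.+1)) f j0 = (tr N f) ^+ (m.+1 + j).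
  by rewrite (subnKC hm) /tr; elim: (m.+1 + j)%N => [|k IH];
    rewrite ?expr0 ?comp_polyC // exprS comp_polyM comp_polyX IH -exprS.
by rewrite expr_low ?mulr0 ?tr0 //; lia.
Qed.

Lemma T_one N : eqN N (tr N ps_one) 1.
Proof. by move=> m hm; rewrite coef_tr // coef1 /ps_one; case: (m == 0%N). Qed.

Lemma T_monom N k c : eqN N (tr N (ps_monom k c)) (c *: 'X^k).
Proof. by move=> m hm; rewrite coef_tr // coefZ coefXn /ps_monom; case: (m == k); rewrite ?mulr1 ?mulr0. Qed.

Lemma T_t N : eqN N (tr N ps_t) 'X.
Proof. by move=> m hm; rewrite /ps_t T_monom // scale1r. Qed.

Lemma T_add N f g : eqN N (tr N (ps_add f g)) (tr N f + tr N g).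
Proof. by move=> m hm; rewrite coefD !coef_tr. Qed.

Local Open Scope ring_scope.
Lemma trc0 N f : f 0%N = 0 -> (tr N f)`_0 = 0. Proof. exact: tr0. Qed.

Lemma pmulA f g h : ps_mul f (ps_mul g h) = ps_mul (ps_mul f g) h.
Proof.
apply: eqN_ext => N.
apply: eqN_trans (T_mul _ _ _) _; apply: eqN_trans (eqN_mul eqN_refl (T_mul _ _ _)) _.
rewrite mulrA; apply: eqN_sym.
apply: eqN_trans (T_mul _ _ _) _; exact: eqN_mul (T_mul _ _ _) eqN_refl.
Qed.

Lemma pmulC f g : ps_mul f g = ps_mul g f.
Proof.
apply: eqN_ext => N; apply: eqN_trans (T_mul _ _ _) _; rewrite mulrC; apply: eqN_sym; exact: T_mul.
Qed.

Lemma mul1f f : ps_mul ps_one f = f.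
Proof.
apply: eqN_ext => N; apply: eqN_trans (T_mul _ _ _) _.
apply: eqN_trans (eqN_mul (T_one _) eqN_refl) _; rewrite mul1r; exact: eqN_refl.
Qed.

Lemma mulf1 f : ps_mul f ps_one = f.
Proof. by rewrite pmulC mul1f. Qed.

Lemma comp1f f : ps_comp ps_one f = ps_one.
Proof.
apply: functional_extensionality => n.
rewrite /ps_comp big_ord_recl big1 ?addr0 /=.
  by rewrite /ps_one /= mul1r.
by move=> j _; rewrite /ps_one /bump /= mul0r.
Qed.

Lemma pcomp0 g f : g 0%N = 0 -> ps_comp g f 0%N = 0.
Proof. by move=> g0; rewrite /ps_comp big_ord1 /= g0 mul0r. Qed.

Lemma compt g : ps_comp g ps_t = g.
Proof.
apply: eqN_ext => N; apply: eqN_trans (T_comp _ _ _ (erefl _)) _.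
apply: eqN_trans (eqN_comp eqN_refl (T_t _) _) _; first by rewrite coef_poly; case: ifP.
rewrite comp_polyXr; exact: eqN_refl.
Qed.

Lemma comptf f : f 0%N = 0 -> ps_comp ps_t f = f.
Proof.
move=> f0; apply: eqN_ext => N; apply: eqN_trans (T_comp _ _ _ f0) _.
apply: eqN_trans (eqN_comp (T_t _) eqN_refl (trc0 _ _ f0)) _.
rewrite comp_polyX; exact: eqN_refl.
Qed.

Lemma pcompA h g f : f 0%N = 0 -> g 0%N = 0 ->
  ps_comp h (ps_comp g f) = ps_comp (ps_comp h g) f.
Proof.
move=> f0 g0; apply: eqN_ext => N.
apply: eqN_trans (T_comp _ _ _ (pcomp0 _ _ g0)) _.
apply: eqN_trans (eqN_comp eqN_refl (T_comp _ _ _ f0) (trc0 _ _ (pcomp0 _ _ g0))) _.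
rewrite comp_polyA; apply: eqN_sym.
apply: eqN_trans (T_comp _ _ _ f0) _.
exact: (eqN_comp (T_comp _ _ _ g0) eqN_refl (trc0 _ _ f0)).
Qed.

Lemma pcompM a b f : f 0%N = 0 ->
  ps_comp (ps_mul a b) f = ps_mul (ps_comp a f) (ps_comp b f).
Proof.
move=> f0; apply: eqN_ext => N.
apply: eqN_trans (T_comp _ _ _ f0) _.
apply: eqN_trans (eqN_comp (T_mul _ _ _) eqN_refl (trc0 _ _ f0)) _.
rewrite comp_polyM; apply: eqN_sym.
apply: eqN_trans (T_mul _ _ _) _.
exact: eqN_mul (T_comp _ _ _ f0) (T_comp _ _ _ f0).
Qed.

From Stdlib Require Import ClassicalEpsilon.
Local Open Scope ring_scope.

Lemma rassoc x y z : x.2 0%N = 0 -> y.2 0%N = 0 ->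
  rmul (rmul x y) z = rmul x (rmul y z).
Proof.
case: x => x1 x2; case: y => y1 y2; case: z => z1 z2 /= hx hy.
rewrite /rmul /=.
by rewrite pcompM // -!pcompA // pmulA.
Qed.

Lemma rmul1r x : x.2 0%N = 0 -> rmul x rone = x.
Proof. case: x => x1 x2 /= h; by rewrite /rmul /= comp1f mulf1 comptf. Qed.

Lemma rmul1l x : rmul rone x = x.
Proof. case: x => x1 x2; by rewrite /rmul /= !compt mul1f. Qed.

Lemma rinv_eq x y0 : is_riordan x -> is_riordan y0 -> rmul x y0 = rone ->
  rmul y0 x = rone -> rinv x = y0.
Proof.
move=> hx hy0 h1 h2.
have := @epsilon_spec _ (inhabits rone)
  (fun y => is_riordan y /\ rmul x y = rone /\ rmul y x = rone)
  (ex_intro _ y0 (conj hy0 (conj h1 h2))).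
rewrite -/(rinv x); set y := rinv x; case=> hy [hxy hyx].
case: hy => _ [hy2 _]; case: hx => _ [hx2 _].
by rewrite -(rmul1r y hy2) -h1 -rassoc // hyx rmul1l.
Qed.

From Stdlib Require Import ClassicalEpsilon.
Local Open Scope ring_scope.

Fixpoint Hc (f : fps) (N : nat) : {poly F2} :=
  if N is N'.+1 then
    Hc f N' + ((N' == 1%N)%:R - ((Hc f N') \Po tr N'.+1 f)`_N') *: 'X^N'
  else 0.

Lemma XnPo (p : {poly F2}) k : 'X^k \Po p = p ^+ k.
Proof.
by elim: k => [|k IHk]; rewrite ?expr0 ?comp_polyC // exprS comp_polyM comp_polyX IHk -exprS.
Qed.

Lemma Hc_mono f N k : eqN N (Hc f (N + k)) (Hc f N).
Proof.
elim: k => [|k IH]; first by rewrite addn0.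
move=> m hm; rewrite addnS /= coefD coefZ coefXn.
have -> : (m == (N + k)%N) = false by apply/negbTE; rewrite neq_ltn (leq_trans hm) ?leq_addr.
by rewrite mulr0 addr0 IH.
Qed.

Lemma powN (F : {poly F2}) N : F`_0 = 0 -> F`_1 = 1 -> (F ^+ N)`_N = 1.
Proof.
move=> F0 F1; elim: N => [|k IH]; first by rewrite expr0 coef1.
rewrite exprS coefM big_ord_recl F0 mul0r add0r big_ord_recl /= F1 mul1r.
rewrite /bump /= subSS subn0 IH big1 ?addr0 // => j _.
rewrite expr_low ?mulr0 //; have := ltn_ord j; rewrite /bump /=; lia.
Qed.

Lemma Hc_spec f N : f 0%N = 0 -> f 1%N = 1 -> eqN N (Hc f N \Po tr N f) 'X.
Proof.
move=> f0 f1; elim: N => [|N IH] m hm //.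
rewrite /= comp_polyD comp_polyZ coefD coefZ.
rewrite XnPo.
have F0 : (tr N.+1 f)`_0 = 0 by exact: tr0.
case: (ltnP m N) => hmN.
  rewrite expr_low // mulr0 addr0.
  rewrite (eqN_comp (@eqN_refl N (Hc f N)) (_ : eqN N (tr N.+1 f) (tr N f)) F0 _ hmN) ?IH //.
  by move=> j hj; rewrite !coef_tr // ltnW.
have -> : m = N by apply/eqP; rewrite eqn_leq hmN -ltnS hm.
case: (N) F0 => [|N'] F0; first by rewrite expr0 coef1 eqxx mulr1 addrC subrK coefX.
by rewrite powN // ?coef_tr // mulr1 addrC subrK coefX.
Qed.

Definition cinv (f : fps) : fps := fun m => (Hc f m.+1)`_m.

Lemma T_cinv f N : eqN N (tr N (cinv f)) (Hc f N).
Proof.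
move=> m hm; rewrite coef_tr // /cinv -(subnKC hm).
by rewrite (Hc_mono f m.+1 (N - m.+1) m).
Qed.

Lemma cinv_l f : f 0%N = 0 -> f 1%N = 1 -> ps_comp (cinv f) f = ps_t.
Proof.
move=> f0 f1; apply: eqN_ext => N.
apply: eqN_trans (T_comp _ _ _ f0) _.
apply: eqN_trans (eqN_comp (T_cinv f N) eqN_refl (tr0 _ _ f0)) _.
apply: eqN_trans (Hc_spec f N f0 f1) _.
apply: eqN_sym; exact: T_t.
Qed.

Lemma cinv0 f : cinv f 0%N = 0.
Proof. by rewrite /cinv /= comp_poly0 coef0 subr0 scale0r addr0 coef0. Qed.

Lemma pt0 : ps_t 0%N = 0. Proof. by []. Qed.

Lemma cinv1 f : f 0%N = 0 -> f 1%N = 1 -> cinv f 1%N = 1.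
Proof.
move=> f0 f1.
have := congr1 (fun g => g 1%N) (cinv_l f f0 f1).
rewrite /ps_comp /= big_ord_recl big_ord1 cinv0 mul0r add0r /=.
rewrite /ps_pow /= /ps_mul big_ord_recl big_ord1 /= f0 mul0r add0r f1 mul1r /bump /=.
rewrite /ps_one /ps_t /ps_monom /= addn0 mulr1; exact: id.
Qed.

Lemma cinv_r f : f 0%N = 0 -> f 1%N = 1 -> ps_comp f (cinv f) = ps_t.
Proof.
move=> f0 f1.
have h0 := cinv0 f; have h1 := cinv1 f f0 f1.
have e1 := cinv_l _ h0 h1.
suff ef : f = cinv (cinv f) by rewrite {1}ef.
by rewrite -{1}(comptf f f0) -e1 -pcompA // cinv_l // compt.
Qed.

From Stdlib Require Import ClassicalEpsilon.
Local Open Scope ring_scope.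

Lemma F2_bb (b : bool) : ((b%:R + b%:R) : F2) = 0.
Proof. by case: b; apply/eqP. Qed.

Lemma natr_odd k : (k%:R : F2) = (odd k)%:R.
Proof.
elim: k => [//|k IH]; rewrite mulrS IH /=.
by case: (odd k); apply/eqP.
Qed.

Lemma eqN_shift n k p q : eqN k p q -> eqN (n + k) ('X^n * p) ('X^n * q).
Proof.
move=> h m hm; rewrite !coefXnM; case: ifP => // hmn.
by apply: h; lia.
Qed.

Lemma binom1 i k : (0 < i)%N ->
  eqN i.+1 ((1 + 'X^i) ^+ k) (1 + k%:R *: 'X^i).
Proof.
move=> hi; elim: k => [|k IH]; first by rewrite expr0 scale0r addr0.
rewrite exprS; apply: eqN_trans (eqN_mul eqN_refl IH) _.
move=> m hm; rewrite mulrDl mul1r coefD coefXnM !coefD !coef1 !coefZ !coefXn.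
case: (ltnP m i) => hmi.
  by rewrite (_ : (m == i) = false) ?mulr0 ?addr0 //; apply/negbTE; rewrite neq_ltn hmi.
have -> : m = i by apply/eqP; rewrite eqn_leq hmi -ltnS hm.
rewrite subnn eqxx !mulr1 (_ : (i == 0%N) = false); last by apply/negbTE; rewrite -lt0n.
rewrite (_ : (0 == i)%N = false); last by apply/negbTE; rewrite eq_sym -lt0n.
by rewrite !add0r mulr0 addr0 eqxx -[k.+1]addn1 natrD.
Qed.

From Stdlib Require Import ClassicalEpsilon.
Local Open Scope ring_scope.

Definition vinv n : fps := fun m => if (n %| m)%N then 1 else 0.

Lemma uv n : (0 < n)%N -> ps_mul (ps_add ps_one (ps_monom n 1)) (vinv n) = ps_one.
Proof.
move=> hn; apply: eqN_ext => N.
apply: eqN_trans (T_mul _ _ _) _.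
apply: eqN_trans (eqN_mul (T_add _ _ _) eqN_refl) _.
apply: eqN_trans (eqN_mul (eqN_add (T_one _) (T_monom _ _ _)) eqN_refl) _.
move=> m hm; rewrite scale1r mulrDl mul1r coefD coefXnM (T_one _ _ hm) coef1 !coef_tr //; last lia.
rewrite /vinv; case: (ltnP m n) => hmn.
  case: m hm hmn => [|m] hm hmn; first by rewrite dvdn0 addr0.
  by rewrite (_ : (n %| m.+1)%N = false) ?addr0 //; apply/negbTE/negP => /dvdn_leq; lia.
rewrite dvdn_subl // (_ : (m == 0%N) = false); last by apply/negbTE; rewrite -lt0n; lia.
by case: (n %| m)%N; apply/eqP.
Qed.

Lemma riordan_a n : (0 < n)%N -> is_riordan (a_ n 1).
Proof.
move=> hn; split => //=; rewrite /ps_add /ps_one /ps_monom /=.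
by case: n hn => // n _; rewrite addr0.
Qed.

Lemma rinv_a n : (0 < n)%N -> rinv (a_ n 1) = (vinv n, ps_t).
Proof.
move=> hn; apply: rinv_eq.
- exact: riordan_a.
- by split; [rewrite /= /vinv dvdn0 | split].
- by rewrite /rmul /a_ /rone /= !compt uv.
- by rewrite /rmul /a_ /rone /= !compt pmulC uv.
Qed.

Definition fe i := (e_ i).2.

Lemma fe0 i : fe i 0%N = 0.
Proof. by rewrite /fe /= /ps_add /ps_t /ps_monom /= addr0. Qed.

Lemma fe1 i : (0 < i)%N -> fe i 1%N = 1.
Proof.
move=> hi; rewrite /fe /= /ps_add /ps_t /ps_monom /=.
by case: i hi => // i _; rewrite addr0.
Qed.

Lemma riordan_e i : (0 < i)%N -> is_riordan (e_ i).
Proof. by move=> hi; split; [by [] | split; [exact: fe0 | exact: fe1 i hi]]. Qed.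

Lemma riordan_h i : (0 < i)%N -> is_riordan (ps_one, cinv (fe i)).
Proof. by move=> hi; split; [by [] | split; [exact: cinv0 | exact: cinv1 _ (fe0 i) (fe1 i hi)]]. Qed.

Lemma rinv_e i : (0 < i)%N -> rinv (e_ i) = (ps_one, cinv (fe i)).
Proof.
move=> hi; apply: rinv_eq.
- exact: riordan_e.
- exact: riordan_h.
- by rewrite /rmul /rone /= comp1f mul1f (cinv_l _ (fe0 i) (fe1 i hi)).
- by rewrite /rmul /rone /= comp1f mul1f (cinv_r _ (fe0 i) (fe1 i hi)).
Qed.

Lemma rinv_rinv_e i : (0 < i)%N -> rinv (rinv (e_ i)) = e_ i.
Proof.
move=> hi; rewrite rinv_e //; apply: rinv_eq.
- exact: riordan_h.
- exact: riordan_e.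
- by rewrite /rmul /rone /= comp1f mul1f (cinv_r _ (fe0 i) (fe1 i hi)).
- by rewrite /rmul /rone /= comp1f mul1f (cinv_l _ (fe0 i) (fe1 i hi)).
Qed.

Lemma rcomm_eq n i : (0 < n)%N -> (0 < i)%N ->
  rcomm (a_ n 1) (rinv (e_ i)) = (ps_mul (vinv n) (ps_comp (a_ n 1).1 (fe i)), ps_t).
Proof.
move=> hn hi; rewrite /rcomm rinv_rinv_e // rinv_e // rinv_a //.
rewrite /rmul /= !comp1f !mulf1 !compt (comptf _ (fe0 i)).
by rewrite (cinv_l _ (fe0 i) (fe1 i hi)).
Qed.

From Stdlib Require Import ClassicalEpsilon.
From mathcomp Require Import ring.
Local Open Scope ring_scope.

Lemma final_coef n i : (0 < n)%N -> (0 < i)%N -> forall m, (m <= n + i)%N ->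
  (ps_mul (vinv n) (ps_comp (ps_add ps_one (ps_monom n 1)) (fe i))) m =
  (ps_add ps_one (ps_monom (n + i) (odd n)%:R)) m.
Proof.
move=> hn hi m hm.
set N := (n + i).+1.
suff : eqN N (tr N (ps_mul (vinv n) (ps_comp (ps_add ps_one (ps_monom n 1)) (fe i))))
              (tr N (ps_add ps_one (ps_monom (n + i) (odd n)%:R))).
  by move/(_ m hm); rewrite !coef_tr.
have Ht : eqN N (tr N (fe i)) ('X + 'X^(i.+1)).
  rewrite -[X in _ + X]scale1r.
  exact: eqN_trans (T_add _ _ _) (eqN_add (T_t _) (T_monom _ _ _)).
have Hu : eqN N (tr N (ps_add ps_one (ps_monom n 1))) (1 + 'X^n).
  rewrite -[X in _ + X]scale1r.
  exact: eqN_trans (T_add _ _ _) (eqN_add (T_one _) (T_monom _ _ _)).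
set V := tr N (vinv n).
have Huv : eqN N (V * (1 + 'X^n)) 1.
  have := uv n hn; move/(congr1 (tr N)) => E.
  apply: eqN_trans (eqN_trans _ (T_one N)); last by rewrite -E; exact: eqN_refl.
  apply: eqN_sym; rewrite mulrC; apply: eqN_trans (T_mul _ _ _) _.
  exact: eqN_mul Hu eqN_refl.
have H0 : eqN 1 V 1.
  by move=> k hk; case: k hk => // _; rewrite coef_tr // coef1 /vinv dvdn0.
apply: eqN_trans (T_mul _ _ _) _.
apply: eqN_trans (eqN_mul eqN_refl (T_comp _ _ _ (fe0 i))) _.
apply: eqN_trans (eqN_mul eqN_refl (eqN_comp Hu Ht (tr0 _ _ (fe0 i)))) _.
rewrite -/V comp_polyD -polyC1 comp_polyC polyC1 XnPo.
have -> : ('X + 'X^(i.+1) : {poly F2}) = 'X * (1 + 'X^i) by rewrite mulrDr mulr1 -exprS.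
rewrite exprMn.
have Hb := eqN_le N _ _ _ (eq_leq (esym (addnS n i))) (eqN_shift n i.+1 _ _ (binom1 i n hi)).
apply: eqN_trans (eqN_mul eqN_refl (eqN_add eqN_refl Hb)) _.
rewrite -mul_polyC.
have -> : V * (1 + 'X^n * (1 + (n%:R)%:P * 'X^i)) =
          V * (1 + 'X^n) + (n%:R)%:P * ('X^(n + i) * V) by rewrite exprD; ring.
have Hs : eqN N ('X^(n + i) * V) ('X^(n + i) * 1).
  exact: eqN_le N _ _ _ (eq_leq (esym (addn1 _))) (eqN_shift (n + i) 1 _ _ H0).
apply: eqN_trans (eqN_add Huv (eqN_mul eqN_refl Hs)) _.
apply: eqN_sym; apply: eqN_trans (T_add _ _ _) _.
apply: eqN_trans (eqN_add (T_one _) (T_monom _ _ _)) _.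
rewrite mulr1 -mul_polyC (natr_odd n); exact: eqN_refl.
Qed.

Theorem lemma9 (n i : nat) (hn : (1 <= n)%N) (hi : (1 <= i)%N) :
  in_appell (rcomm (a_ n 1) (rinv (e_ i))) /\
  (forall m : nat, (m <= n + i)%N ->
     (rcomm (a_ n 1) (rinv (e_ i))).1 m = (a_ (n + i) ((odd n)%:R : F2)).1 m).
Proof.
rewrite rcomm_eq //; split; last first.
  by move=> m hm; rewrite /= (final_coef n i hn hi m hm).
split => //; split => //=.
rewrite (final_coef n i hn hi 0 (leq0n _)) /ps_add /ps_one /ps_monom /=.
by rewrite (_ : (0 == n + i)%N = false) ?addr0 //; case: n hn.
Qed.
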